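(* Let $Y$ be a solid vector space, let $(X,d)$ be a complete cone metric space over $Y$, and let $D\subseteq X$ and $T\colon D\to X$ be a mapping satisfying: (a) $d(Tx,T^2x)\preceq \lambda\, d(x,Tx)$ for all $x\in D$ with $Tx\in D$, where $0\le\lambda<1$; (b) there is $x_0\in D$ such that $\overline U(x_0,r)\subseteq D$, where $r=\frac{1}{1-\lambda}\,d(x_0,Tx_0)$. Then: (i) The Picard iteration $x_{n+1}=Tx_n$ ($n=0,1,2,\dots$) starting from $x_0$ is well defined (i.e. $x_n\in D$ for all $n$), remains in the closed ball $\overline U(x_0,r)$ and converges to a point $\xi\in\overline U(x_0,r)$. (ii) $d(x_n,\xi)\preceq \frac{\lambda^n}{1-\lambda}\, d(x_0,Tx_0)$ for all $n\ge 0$. (iii) $d(x_n,\xi)\preceq\frac{1}{1-\lambda}\,d(x_n,x_{n+1})$ for all $n\ge0$, and $d(x_n,\xi)\preceq \frac{\lambda}{1-\lambda}\,d(x_n,x_{n-1})$ for all $n\ge 1$. (iv) If at least one of the following conditions holds, then $\xi$ is a fixed point of $T$: (F1) $T$ is continuous at $\xi$; (F2) $T$ has a closed graph, i.e. $\{(x,Tx):x\in D\}$ is a closed subset of $D\times X$.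
   Context: Vector space with convergence: a real vector space $Y$ with a relation $\to$ between sequences in $Y$ and points of $Y$ (write $x_n\to x$, $x$ is ''a limit''; uniqueness of limits is not assumed) such that (C1) $x_n\to x$, $y_n\to y$ imply $x_n+y_n\to x+y$; (C2) $x_n\to x$, $\lambda\in\mathbb R$ imply $\lambda x_n\to\lambda x$; (C3) $\lambda_n\to\lambda$ in $\mathbb R$, $x\in Y$ imply $\lambda_n x\to\lambda x$. A set $A\subseteq Y$ is open if $x_n\to x\in A$ implies $x_n\in A$ for all but finitely many $n$; closed if $x_n\to x$ and $x_n\in A$ for all $n$ imply $x\in A$. The interior $A^\circ$ is the union of all open subsets of $A$. A cone is a nonempty closed $K\subseteq Y$ with $\lambda K\subseteq K$ ($\lambda\ge0$), $K+K\subseteq K$, $K\cap(-K)=\{0\}$; it is solid if $K\neq\{0\}$ and $K^\circ\ne\emptyset$. A vector ordering is a partial order $\preceq$ on $Y$ with (V1) $x\preceq y\Rightarrow x+z\preceq y+z$; (V2) $\lambda\ge0$, $x\preceq y\Rightarrow \lambda x\preceq\lambda y$; (V3) $x_n\to x$, $y_n\to y$, $x_n\preceq y_n$ for all $n$ $\Rightarrow x\preceq y$. A solid vector space is such a $(Y,\preceq,\to)$ whose positive cone $K=\{x:x\succeq0\}$ is solid, equipped with $x\prec y$ iff $y-x\in K^\circ$. Cone metric space over $Y$: a nonempty set $X$ with $d\colon X\times X\to Y$ such that $d(x,y)\succeq 0$, $d(x,y)=0$ iff $x=y$, $d(x,y)=d(y,x)$, and $d(x,y)\preceq d(x,z)+d(z,y)$.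 The open balls $U(x,r)=\{y\in X:d(y,x)\prec r\}$ ($r\succ0$) form a basis of a topology on $X$ (the cone metric topology), with which $X$ is endowed; thus $x_n\to x$ in $X$ iff for every $c\succ0$, $d(x_n,x)\prec c$ for all but finitely many $n$. Closed ball: $\overline U(x,r)=\{y\in X: d(y,x)\preceq r\}$ for $r\succeq0$. A sequence $(x_n)$ is Cauchy if for every $c\succ0$ there is $N$ with $d(x_n,x_m)\prec c$ for all $n,m>N$; $X$ is complete if every Cauchy sequence converges. Convention: $0^0=1$. *)

(* Defs.v *)
From HB Require Import structures.
From mathcomp Require Import all_boot all_order all_algebra.
From mathcomp Require Import all_classical all_reals topology normedtype.
Set Implicit Arguments. Unset Strict Implicit. Unset Printing Implicit Defensive.
Import Order.TTheory GRing.Theory Num.Theory.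
Import numFieldNormedType.Exports.
Local Open Scope ring_scope.
Local Open Scope classical_set_scope.

Section Defs.
Variables (R : realType) (Y : lmodType R).

Definition conv_open (conv : (nat -> Y) -> Y -> Prop) (A : set Y) : Prop :=
  forall (xs : nat -> Y) (x : Y), conv xs x -> A x ->
    exists N : nat, forall n : nat, (N <= n)%N -> A (xs n).

Definition conv_interior (conv : (nat -> Y) -> Y -> Prop) (A : set Y) : set Y :=
  fun x => exists U : set Y, conv_open conv U /\ U `<=` A /\ U x.

(** A solid vector space: a real vector space with convergence (C1)-(C3),
    a vector ordering (partial order with (V1)-(V3)) whose positive cone
    K = {x | 0 <= x} satisfies K <> {0} and has nonempty interior. *)
Record solid_vector_space := SolidVectorSpace {
  conv : (nat -> Y) -> Y -> Prop;
  vle : Y -> Y -> Prop;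
  conv_add : forall xs ys x y, conv xs x -> conv ys y ->
    conv (fun n => xs n + ys n) (x + y);
  conv_scale : forall xs x (l : R), conv xs x -> conv (fun n => l *: xs n) (l *: x);
  conv_scalar : forall (ls : nat -> R) (l : R) (x : Y), ls @ \oo --> l ->
    conv (fun n => ls n *: x) (l *: x);
  vle_refl : forall x, vle x x;
  vle_anti : forall x y, vle x y -> vle y x -> x = y;
  vle_trans : forall x y z, vle x y -> vle y z -> vle x z;
  vle_add : forall x y z, vle x y -> vle (x + z) (y + z);
  vle_scale : forall (l : R) x y, 0 <= l -> vle x y -> vle (l *: x) (l *: y);
  vle_closed : forall xs ys x y, conv xs x -> conv ys y ->
    (forall n, vle (xs n) (ys n)) -> vle x y;
  cone_nontrivial : exists x, vle 0 x /\ x <> 0;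
  cone_solid : exists x, conv_interior conv (fun z => vle 0 z) x
}.

Variable S : solid_vector_space.

Definition vlt (x y : Y) : Prop :=
  conv_interior (conv S) (fun z => vle S 0 z) (y - x).

Variable X : Type.

Definition is_cone_metric (d : X -> X -> Y) : Prop :=
  (forall x y, vle S 0 (d x y)) /\
  (forall x y, d x y = 0 <-> x = y) /\
  (forall x y, d x y = d y x) /\
  (forall x y z, vle S (d x y) (d x z + d z y)).

Variable d : X -> X -> Y.

Definition oball (x : X) (r : Y) : set X := fun y => vlt (d y x) r.
Definition cball (x : X) (r : Y) : set X := fun y => vle S (d y x) r.

Definition cm_open (A : set X) : Prop :=
  forall x, A x -> exists (z : X) (r : Y), vlt 0 r /\ oball z r x /\ oball z r `<=` A.

Definition cm_conv (xs : nat -> X) (x : X) : Prop :=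
  forall c, vlt 0 c -> exists N : nat, forall n : nat, (N <= n)%N -> vlt (d (xs n) x) c.

Definition cm_cauchy (xs : nat -> X) : Prop :=
  forall c, vlt 0 c -> exists N : nat, forall n m : nat, (N < n)%N -> (N < m)%N ->
    vlt (d (xs n) (xs m)) c.

Definition cm_complete : Prop :=
  forall xs, cm_cauchy xs -> exists x, cm_conv xs x.

(** T : D -> X (represented as a total map, only its values on D matter)
    is continuous at xi (topologically, w.r.t. the subspace D). *)
Definition cm_continuous_at (D : set X) (T : X -> X) (xi : X) : Prop :=
  forall V, cm_open V -> V (T xi) ->
    exists W, cm_open W /\ W xi /\ forall y, D y -> W y -> V (T y).

(** The graph {(x,Tx) : x in D} is closed in D × X (product of the subspace
    topology on D and the cone metric topology on X): its complement in
    D × X is open. *)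
Definition cm_closed_graph (D : set X) (T : X -> X) : Prop :=
  forall a b, D a -> b <> T a ->
    exists V1 V2, cm_open V1 /\ cm_open V2 /\ V1 a /\ V2 b /\
      forall x y, D x -> V1 x -> V2 y -> y <> T x.

End Defs.

(* Main.v *)
Require Import Defs.
From HB Require Import structures.
From mathcomp Require Import all_boot all_order all_algebra.
From mathcomp Require Import all_classical all_reals topology normedtype sequences.
From mathcomp Require Import ring lra.
Set Implicit Arguments. Unset Strict Implicit.
Import Order.TTheory GRing.Theory Num.Theory.
Import numFieldNormedType.Exports.
Local Open Scope ring_scope.
Local Open Scope classical_set_scope.

Lemma conv_cst (R : realType) (Y : lmodType R) (S : solid_vector_space Y) (a : Y) :
  conv S (fun _ => a) a.
Proof.
have h := conv_scalar S a (cvg_cst (1 : R)).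
rewrite scale1r in h; apply: h.
Qed.

Lemma vle_addD (R : realType) (Y : lmodType R) (S : solid_vector_space Y) (a b c e : Y) :
  vle S a b -> vle S c e -> vle S (a + c) (b + e).
Proof.
move=> h1 h2; apply: (vle_trans (vle_add c h1)).
by rewrite (addrC b) (addrC b); exact: vle_add.
Qed.

Lemma vle_sub0 (R : realType) (Y : lmodType R) (S : solid_vector_space Y) (a b : Y) :
  vle S a b -> vle S 0 (b - a).
Proof. by move=> h; have := vle_add (- a) h; rewrite subrr. Qed.

Lemma vle_of_sub0 (R : realType) (Y : lmodType R) (S : solid_vector_space Y) (a b : Y) :
  vle S 0 (b - a) -> vle S a b.
Proof. by move=> h; have := vle_add a h; rewrite add0r subrK. Qed.

Lemma vlt_vle (R : realType) (Y : lmodType R) (S : solid_vector_space Y) (a b : Y) :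
  vlt S a b -> vle S a b.
Proof. by case=> U [_ [UK Ux]]; apply: vle_of_sub0; exact: UK. Qed.

Lemma vle_vlt (R : realType) (Y : lmodType R) (S : solid_vector_space Y) (a b c : Y) :
  vle S a b -> vlt S b c -> vlt S a c.
Proof.
move=> hab [U [Uo [UK Uc]]]; set k := b - a.
have k0 : vle S 0 k by exact: vle_sub0.
exists (fun y => U (y - k)); split; last split.
- move=> xs x hx Ux; have := Uo _ _ (conv_add hx (conv_cst S (- k))) Ux.
  by [].
- move=> y /UK h; apply: (vle_trans k0); apply: vle_of_sub0; by [].
- by rewrite /k opprB addrA subrK.
Qed.

Lemma vlt_addr (R : realType) (Y : lmodType R) (S : solid_vector_space Y) (a b k : Y) :
  vlt S a b -> vlt S (a + k) (b + k).
Proof. by rewrite /vlt opprD addrACA subrr addr0. Qed.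

Lemma vlt0_scale (R : realType) (Y : lmodType R) (S : solid_vector_space Y) (c : Y) (t : R) :
  0 < t -> vlt S 0 c -> vlt S 0 (t *: c).
Proof.
move=> t0; rewrite /vlt !subr0 => -[U [Uo [UK Uc]]].
exists (fun y => U (t^-1 *: y)); split; last split.
- move=> xs x hx Ux; exact: Uo _ _ (conv_scale _ hx) Ux.
- move=> y /UK h; have := vle_scale (ltW t0) h.
  by rewrite scaler0 scalerA divff ?gt_eqF // scale1r.
- by rewrite scalerA mulVf ?gt_eqF // scale1r.
Qed.

Lemma vle_eps (R : realType) (Y : lmodType R) (S : solid_vector_space Y) (a b : Y) :
  (forall c, vlt S 0 c -> vle S a (b + c)) -> vle S a b.
Proof.
move=> h; have [c0 hc0] := cone_solid S.
have hc : vlt S 0 c0 by rewrite /vlt subr0.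
have hs : conv S (fun n => b + (@harmonic R n) *: c0) (b + 0 *: c0).
  exact: conv_add (conv_cst S b) (conv_scalar S c0 cvg_harmonic).
rewrite scale0r addr0 in hs.
apply: (vle_closed (conv_cst S a) hs) => n; apply: h; apply: vlt0_scale => //.
by rewrite /harmonic /= invr_gt0 ltr0n.
Qed.

Lemma vlt_event (R : realType) (Y : lmodType R) (S : solid_vector_space Y) (xs : nat -> Y) (c : Y) :
  conv S xs 0 -> vlt S 0 c -> exists N, forall n, (N <= n)%N -> vlt S (xs n) c.
Proof.
move=> hx; rewrite /vlt subr0 => -[U [Uo [UK Uc]]].
have h := conv_add (conv_cst S c) (conv_scale (-1) hx).
rewrite scaler0 addr0 in h.
have [N HN] := Uo _ _ h Uc.
exists N => n /HN Un; exists U; split=> //; split=> //.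
by rewrite scaleN1r in Un.
Qed.

Lemma scal_mono (R : realType) (Y : lmodType R) (S : solid_vector_space Y) (s t : R) (v : Y) :
  s <= t -> vle S 0 v -> vle S (s *: v) (t *: v).
Proof.
move=> st v0; apply: vle_of_sub0; rewrite -scalerBl.
have h : 0 <= t - s by rewrite subr_ge0.
by have := vle_scale h v0; rewrite scaler0.
Qed.

Lemma chain (R : realType) (Y : lmodType R) (S : solid_vector_space Y) (X : Type)
  (d : X -> X -> Y) (hd : is_cone_metric S d) (y : nat -> X) (e : Y) (lam : R)
  (hl1 : lam < 1) (j : nat) :
  (forall k, (k < j)%N -> vle S (d (y k) (y k.+1)) (lam ^+ k *: e)) ->
  vle S (d (y 0%N) (y j)) (((1 - lam ^+ j) / (1 - lam)) *: e).
Proof.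
case: hd => [d0 [deq [dsym dtri]]].
have l1 : 1 - lam != 0 by rewrite subr_eq0 eq_sym lt_eqF.
elim: j => [|j IH] h.
  have -> : d (y 0%N) (y 0%N) = 0 by apply/deq.
  by rewrite expr0 subrr mul0r scale0r; exact: vle_refl.
apply: (vle_trans (dtri _ _ (y j))).
have -> : (1 - lam ^+ j.+1) / (1 - lam) = (1 - lam ^+ j) / (1 - lam) + lam ^+ j.
  by rewrite exprS; field.
rewrite scalerDl; apply: vle_addD.
  by apply: IH => k kj; apply: h; exact: ltnW.
exact: h.
Qed.

Lemma lim_bound (R : realType) (Y : lmodType R) (S : solid_vector_space Y) (X : Type)
  (d : X -> X -> Y) (hd : is_cone_metric S d) (xs : nat -> X) (xi a : X) (b : Y) (N : nat) :
  cm_conv S d xs xi -> (forall m, (N <= m)%N -> vle S (d a (xs m)) b) ->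
  vle S (d a xi) b.
Proof.
case: hd => [d0 [deq [dsym dtri]]] hc hb.
apply: vle_eps => c /hc [M HM].
apply: (vle_trans (dtri _ _ (xs (maxn N M)))).
apply: vle_addD; first by apply: hb; exact: leq_maxl.
by apply: vlt_vle; apply: HM; exact: leq_maxr.
Qed.

Lemma open_event (R : realType) (Y : lmodType R) (S : solid_vector_space Y) (X : Type)
  (d : X -> X -> Y) (hd : is_cone_metric S d) (xs : nat -> X) (xi : X) (W : set X) :
  cm_open S d W -> W xi -> cm_conv S d xs xi ->
  exists N, forall n, (N <= n)%N -> W (xs n).
Proof.
case: hd => [d0 [deq [dsym dtri]]] Wo Wxi hc.
have [z [r [r0 [hz sub]]]] := Wo _ Wxi.
have c0 : vlt S 0 (r - d xi z) by rewrite /vlt subr0.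
have [N HN] := hc _ c0.
exists N => n /HN h; apply: sub; rewrite /oball.
apply: (vle_vlt (dtri _ _ xi)).
by have := vlt_addr (d xi z) h; rewrite subrK.
Qed.

Theorem theorem10p5 (R : realType) (Y : lmodType R) (S : solid_vector_space Y)
  (X : Type) (d : X -> X -> Y) (hd : is_cone_metric S d) (hcomp : cm_complete S d)
  (D : set X) (T : X -> X) (lam : R) (hl0 : 0 <= lam) (hl1 : lam < 1)
  (ha : forall x, D x -> D (T x) ->
        vle S (d (T x) (T (T x))) (lam *: d x (T x)))
  (x0 : X) (hx0 : D x0)
  (hb : cball S d x0 ((1 - lam)^-1 *: d x0 (T x0)) `<=` D) :
  (forall n : nat, D (iter n T x0) /\
     cball S d x0 ((1 - lam)^-1 *: d x0 (T x0)) (iter n T x0)) /\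
  exists xi : X,
    cball S d x0 ((1 - lam)^-1 *: d x0 (T x0)) xi /\
    cm_conv S d (fun n => iter n T x0) xi /\
    (forall n : nat,
       vle S (d (iter n T x0) xi) ((lam ^+ n / (1 - lam)) *: d x0 (T x0))) /\
    (forall n : nat,
       vle S (d (iter n T x0) xi) ((1 - lam)^-1 *: d (iter n T x0) (iter n.+1 T x0))) /\
    (forall n : nat, (1 <= n)%N ->
       vle S (d (iter n T x0) xi) ((lam / (1 - lam)) *: d (iter n T x0) (iter n.-1 T x0))) /\
    (cm_continuous_at S d D T xi \/ cm_closed_graph S d D T -> T xi = xi).
Proof.
have hd' := hd; case: hd' => [d0 [deq [dsym dtri]]].
set x := fun n => iter n T x0.
have xS : forall n, x n.+1 = T (x n) by [].
set e := fun n => d (x n) (x n.+1).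
set r := (1 - lam)^-1 *: d x0 (T x0).
have l1 : 0 < 1 - lam by rewrite subr_gt0.
have il0 : 0 <= (1 - lam)^-1 by rewrite invr_ge0 ltW.
have coefle : forall j, (1 - lam ^+ j) / (1 - lam) <= (1 - lam)^-1.
  move=> j; rewrite ler_pdivrMr // mulVf ?gt_eqF //.
  by rewrite lerBlDr lerDl exprn_ge0.
have step0 : forall n k, (k <= n)%N -> D (x k) /\ vle S (e k) (lam ^+ k *: e 0%N).
  elim=> [|n IH] k.
    rewrite leqn0 => /eqP ->; split=> //.
    by rewrite expr0 scale1r; exact: vle_refl.
  rewrite leq_eqVlt => /orP [/eqP -> | kn]; last exact: IH.
  have hc : vle S (d (x n.+1) x0) r.
    have hs : forall k', (k' < n.+1)%N -> vle S (d (x k') (x k'.+1)) (lam ^+ k' *: e 0%N).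
      by move=> k' kn'; have [_ ] := IH k' kn'.
    rewrite dsym; apply: (vle_trans (chain hd hl1 hs)).
    exact: scal_mono (coefle _) (d0 _ _).
  have Dn1 : D (x n.+1) by exact: hb.
  split=> //.
  have [Dn en] := IH n (leqnn n).
  apply: (vle_trans (ha _ Dn Dn1)).
  rewrite exprS -scalerA.
  exact: vle_scale hl0 en.
have hD : forall n, D (x n) by move=> n; have [] := step0 n n (leqnn n).
have gstep : forall n k, vle S (e (n + k)%N) (lam ^+ k *: e n).
  move=> n; elim=> [|k IH]; first by rewrite addn0 expr0 scale1r; exact: vle_refl.
  rewrite addnS; apply: (vle_trans (ha _ (hD _) (hD (n + k).+1))).
  rewrite exprS -scalerA; exact: vle_scale hl0 IH.
have gchain : forall n j, vle S (d (x n) (x (n + j)%N)) ((1 - lam)^-1 *: e n).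
  move=> n j.
  have := chain hd (y := fun k => x (n + k)%N) (e := e n) hl1 (j := j).
  rewrite addn0 => h.
  have hs : forall k, (k < j)%N -> vle S (d (x (n + k)%N) (x (n + k.+1)%N)) (lam ^+ k *: e n).
    by move=> k _; rewrite addnS; exact: gstep.
  apply: (vle_trans (h hs)).
  exact: scal_mono (coefle _) (d0 _ _).
have eb : forall n, vle S (e n) (lam ^+ n *: e 0%N).
  by move=> n; have := gstep 0%N n; rewrite add0n.
have gbound : forall n m, (n <= m)%N ->
    vle S (d (x n) (x m)) (((1 - lam)^-1 * lam ^+ n) *: e 0%N).
  move=> n m nm; have := gchain n (m - n)%N; rewrite subnKC // => h.
  apply: (vle_trans h); rewrite -scalerA; exact: vle_scale il0 (eb n).
have hcball : forall n, vle S (d (x n) x0) r.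
  move=> n; rewrite dsym; have := gchain 0%N n; rewrite add0n => h.
  exact: h.
have cau : cm_cauchy S d x.
  move=> c c0.
  have hg : conv S (fun n => geometric (1 - lam)^-1 lam n *: e 0%N) (0 *: e 0%N).
    apply: conv_scalar; apply: cvg_geometric; by rewrite ger0_norm.
  rewrite scale0r in hg.
  have [N HN] := vlt_event hg c0.
  exists N => n m nN mN.
  wlog nm : n m nN mN / (n <= m)%N.
    move=> W; case: (leqP n m) => h; first exact: W.
    by rewrite dsym; apply: W => //; exact: ltnW.
  apply: vle_vlt (gbound _ _ nm) _.
  by apply: HN; exact: ltnW.
have [xi hxi] := hcomp _ cau.
have iiia : forall n, vle S (d (x n) xi) ((1 - lam)^-1 *: e n).
  move=> n; apply: (lim_bound hd (N := n) hxi) => m nm.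
  by have := gchain n (m - n)%N; rewrite subnKC.
split; first by move=> n; split; [exact: hD | exact: hcball].
exists xi; split.
  rewrite /cball dsym; apply: (lim_bound hd (N := 0%N) hxi) => m _.
  by rewrite dsym; exact: hcball.
split; first exact: hxi.
split.
  move=> n; apply: (vle_trans (iiia n)).
  rewrite mulrC -scalerA; exact: vle_scale il0 (eb n).
split; first exact: iiia.
split.
  case=> [|p] // _; rewrite /=.
  apply: (vle_trans (iiia p.+1)).
  have := gstep p 1%N; rewrite addn1 expr1 => h.
  have -> : d (iter p.+1 T x0) (iter p T x0) = e p by rewrite dsym.
  rewrite mulrC -scalerA; exact: vle_scale il0 h.
have Dxi : D xi.
  apply: hb; rewrite /cball dsym; apply: (lim_bound hd (N := 0%N) hxi) => m _.
  by rewrite dsym; exact: hcball.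
case=> [hcont | hcl].
  have h0 : vle S (d xi (T xi)) 0.
    apply: vle_eps => c c0; rewrite add0r.
    have c2 : vlt S 0 (2^-1 *: c) by apply: vlt0_scale c0; rewrite invr_gt0.
    have [N1 HN1] : exists N, forall n, (N <= n)%N -> vlt S (d (x n.+1) (T xi)) (2^-1 *: c).
      have Vo : cm_open S d (oball S d (T xi) (2^-1 *: c)).
        by move=> y hy; exists (T xi), (2^-1 *: c); split=> //; split.
      have VT : oball S d (T xi) (2^-1 *: c) (T xi) by rewrite /oball (deq _ _).2.
      have [W [Wo [Wxi HW]]] := hcont _ Vo VT.
      have [N HN] := open_event hd Wo Wxi hxi.
      by exists N => n /HN Wn; exact: (HW _ (hD n) Wn).
    have [N2 HN2] := hxi _ c2.
    set m := maxn N1 N2.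
    apply: (vle_trans (dtri _ _ (x m.+1))).
    have -> : c = 2^-1 *: c + 2^-1 *: c.
      by rewrite -scalerDl (_ : 2^-1 + 2^-1 = 1 :> R) ?scale1r //; field.
    apply: vle_addD; apply: vlt_vle.
      rewrite dsym; apply: HN2; apply: leq_trans (leq_maxr N1 N2) (leqnSn _).
    by apply: HN1; exact: leq_maxl.
  have : d xi (T xi) = 0 by apply: vle_anti h0 (d0 _ _).
  by move/deq => h; rewrite -h.
case: (pselect (T xi = xi)) => // hne.
have [V1 [V2 [V1o [V2o [V1xi [V2xi HV]]]]]] := hcl _ _ Dxi (nesym hne).
have [N1 HN1] := open_event hd V1o V1xi hxi.
have [N2 HN2] := open_event hd V2o V2xi hxi.
set m := maxn N1 N2.
exfalso; apply: (HV (x m) (x m.+1) (hD m)).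
- by apply: HN1; exact: leq_maxl.
- by apply: HN2; apply: leq_trans (leq_maxr N1 N2) (leqnSn _).
- by [].
Qed.
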